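(* Let $D$ be a strongly connected oriented graph such that for every vertex $x$, $x^+$ induces a transitive tournament. Then the inclusion-wise maximal hubs of $D$ form a partition of $V(D)$. Moreover, for any two distinct maximal hubs $H_1,H_2$, exactly one of the following holds: (i) there is no arc between $H_1$ and $H_2$; (ii) there is a nonempty set $S\subseteq H_2$ inducing a transitive tournament such that the arcs between $H_1$ and $H_2$ are exactly all arcs $hs$ with $h\in H_1$, $s\in S$; (iii) the same as (ii) with the roles of $H_1$ and $H_2$ exchanged.
   Context: Digraphs are finite, no loops, no parallel arcs; an oriented graph has no digon. $x^+$, $x^-$ denote out- and in-neighbourhoods. A hub of $D$ is a set $H\subseteq V(D)$ such that $D[H]$ is strongly connected and there exists a vertex $x\notin H$ with $H\subseteq x^-$. (Every single vertex forms a hub, since $D$ is strong.) *)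

(* Defs.v *)
(* A digraph on a finite vertex type T is given by its arc
   relation a : rel T (a x y means there is an arc x -> y). *)
From mathcomp Require Import all_boot.
Set Implicit Arguments. Unset Strict Implicit. Unset Printing Implicit Defensive.

Section Digraphs.
Variable T : finType.
Variable a : rel T.

Definition oriented : Prop :=
  (forall x, ~~ a x x) /\ (forall x y, a x y -> ~~ a y x).

Definition strong : Prop := forall x y : T, connect a x y.

Definition outnb (x : T) : {set T} := [set y | a x y].
Definition innb (x : T) : {set T} := [set y | a y x].

Definition induced (H : {set T}) : rel T :=
  [rel u v | [&& u \in H, v \in H & a u v]].

Definition strong_in (H : {set T}) : Prop :=
  H != set0 /\ forall x y, x \in H -> y \in H -> connect (induced H) x y.

Definition transitive_tournament (S : {set T}) : Prop :=
  (forall u v, u \in S -> v \in S -> u != v -> a u v || a v u) /\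
  (forall u v w, u \in S -> v \in S -> w \in S -> a u v -> a v w -> a u w).

Definition hub (H : {set T}) : Prop :=
  strong_in H /\ exists x, x \notin H /\ H \subset innb x.

Definition maximal_hub (H : {set T}) : Prop :=
  hub H /\ forall H', hub H' -> H \subset H' -> H' = H.

Definition some_arc_between (H1 H2 : {set T}) : Prop :=
  exists u v, [/\ u \in H1, v \in H2 & a u v || a v u].

Definition arcs_into (H1 H2 : {set T}) : Prop :=
  exists S : {set T},
    [/\ S \subset H2, S != set0, transitive_tournament S &
        forall u v, (u \in H1 /\ v \in H2) \/ (u \in H2 /\ v \in H1) ->
          (a u v <-> (u \in H1 /\ v \in S))].
End Digraphs.

Definition exactly_one3 (P Q R : Prop) : Prop :=
  (P /\ ~ Q /\ ~ R) \/ (~ P /\ Q /\ ~ R) \/ (~ P /\ ~ Q /\ R).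

(* Main.v *)
Require Import Defs.
From mathcomp Require Import all_boot.
From Stdlib Require Import Classical.
Set Implicit Arguments. Unset Strict Implicit. Unset Printing Implicit Defensive.

Section Proof.
Variable T : finType.
Variable a : rel T.
Hypothesis Hor : oriented a.
Hypothesis Htt : forall x : T, transitive_tournament a (outnb a x).

Lemma noloop x : ~~ a x x. Proof. by case: Hor. Qed.
Lemma asym x y : a x y -> ~~ a y x. Proof. by case: Hor => _; apply. Qed.

Lemma tt_cmp x u v : a x u -> a x v -> u != v -> a u v || a v u.
Proof. by move=> Hu Hv; case: (Htt x) => H _; apply: H; rewrite inE. Qed.

Lemma tt_tr x u v w : a x u -> a x v -> a x w -> a u v -> a v w -> a u w.
Proof. by move=> Hu Hv Hw; case: (Htt x) => _ H; apply: H; rewrite inE. Qed.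

Lemma conn_inv (e : rel T) (P : pred T) x y :
  (forall u w, e u w -> P u -> P w) -> connect e x y -> P x -> P y.
Proof.
move=> HP /connectP [p Hp ->]; elim: p x Hp => //= z p IH x /andP [Hxz Hp] Px.
by apply: IH => //; apply: HP Px.
Qed.

Lemma sink_ex v y0 : a v y0 ->
  exists t, a v t /\ forall y, a v y -> y = t \/ a y t.
Proof.
move=> Hy0.
case: (arg_maxnP (fun y => #|[set z | a v z && a z y]|) Hy0) => t Ht Hmax.
exists t; split => // y Hy; case: (eqVneq y t) => [->|Hne]; first by left.
case/orP: (tt_cmp Hy Ht Hne) => [H|H]; first by right.
have : #|[set z | a v z && a z y]| <= #|[set z | a v z && a z t]| := Hmax y Hy; rewrite leqNgt => /negP; case; apply: proper_card.
apply/properP; split.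
  apply/subsetP => z; rewrite !inE => /andP [Hz Hzt]; rewrite Hz /=.
  exact: (tt_tr Hz Ht Hy Hzt H).
by exists t; rewrite !inE ?Ht ?H //= noloop.
Qed.

Lemma lemW H x v t :
  strong_in a H -> x \notin H -> H \subset innb a x -> v \in H ->
  a v t -> (forall y, a v y -> y = t \/ a y t) ->
  H \subset innb a t /\ t \notin H.
Proof.
move=> [_ Hs] HxH /subsetP Hsub Hv Hvt Hsink.
have Hvx : a v x by have := Hsub v Hv; rewrite inE.
have Hxt : x = t \/ a x t by apply: Hsink.
have HtH : t \notin H.
  apply/negP => HtH; case: Hxt => [Ext|Hxt]; first by rewrite Ext HtH in HxH.
  have := Hsub t HtH; rewrite inE => Htx.
  by move: (asym Hxt); rewrite Htx.
split => //; apply/subsetP => y Hy.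
have := conn_inv (P := fun h => a h t) _ (Hs v y Hv Hy); rewrite inE; apply => //.
move=> h w /andP [Hh /andP [Hw Hhw]] Hht.
have Hhx : a h x by have := Hsub h Hh; rewrite inE.
have Hwx : a w x by have := Hsub w Hw; rewrite inE.
have Hwt : w != t by apply/eqP => E; rewrite -E Hw in HtH.
case/orP: (tt_cmp Hhw Hht Hwt) => // Htw.
case: Hxt => [Ext|Hxt].
  by subst x; move: (asym Htw); rewrite Hwx.
have := tt_tr Hht Hhw Hhx Htw Hwx => Htx.
by move: (asym Hxt); rewrite Htx.
Qed.

Lemma hub_outnb H v : hub a H -> v \in H -> exists y, a v y.
Proof.
move=> [_ [x [_ /subsetP Hs]]] Hv; exists x; have := Hs v Hv; by rewrite inE.
Qed.

Lemma hub_sink H v : hub a H -> v \in H ->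
  exists t, [/\ a v t, (forall y, a v y -> y = t \/ a y t),
            H \subset innb a t & t \notin H].
Proof.
move=> Hh Hv; have [y0 Hy0] := hub_outnb Hh Hv.
have [t [Hvt Hsink]] := sink_ex Hy0; exists t.
case: Hh => Hs [x [HxH Hsub]].
by have [] := lemW Hs HxH Hsub Hv Hvt Hsink.
Qed.

Lemma conn_mono (A B : {set T}) x y : A \subset B ->
  connect (induced a A) x y -> connect (induced a B) x y.
Proof.
move=> /subsetP AB; apply: connect_sub => u w /andP [Hu /andP [Hw Huw]].
by apply: connect1; apply/and3P; split => //; apply: AB.
Qed.

Lemma strong_union H1 H2 u1 u2 w1 w2 :
  strong_in a H1 -> strong_in a H2 ->
  u1 \in H1 -> u2 \in H2 -> w1 \in H1 -> w2 \in H2 ->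
  connect (induced a (H1 :|: H2)) u1 u2 ->
  connect (induced a (H1 :|: H2)) w2 w1 ->
  strong_in a (H1 :|: H2).
Proof.
move=> [Hn1 S1] [_ S2] Hu1 Hu2 Hw1 Hw2 C12 C21; split.
  apply: contraNneq Hn1 => E; apply/eqP/setP => z; rewrite inE.
  by apply/negP => Hz; have := in_set0 z; rewrite -E inE Hz.
have s1 := subsetUl H1 H2; have s2 := subsetUr H1 H2.
move=> x y; rewrite !inE => /orP [Hx|Hx] /orP [Hy|Hy].
- exact: conn_mono s1 (S1 _ _ Hx Hy).
- apply: connect_trans (conn_mono s1 (S1 _ _ Hx Hu1)) _.
  exact: connect_trans C12 (conn_mono s2 (S2 _ _ Hu2 Hy)).
- apply: connect_trans (conn_mono s2 (S2 _ _ Hx Hw2)) _.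
  exact: connect_trans C21 (conn_mono s1 (S1 _ _ Hw1 Hy)).
- exact: conn_mono s2 (S2 _ _ Hx Hy).
Qed.

Lemma hub_union_common H1 H2 t :
  hub a H1 -> hub a H2 -> strong_in a (H1 :|: H2) ->
  H1 \subset innb a t -> t \notin H1 -> H2 \subset innb a t -> t \notin H2 ->
  hub a (H1 :|: H2).
Proof.
move=> _ _ Hs S1 N1 S2 N2; split => //; exists t; split.
  by rewrite inE negb_or N1 N2.
by rewrite subUset S1 S2.
Qed.

Lemma union_inter H1 H2 v : hub a H1 -> hub a H2 -> v \in H1 -> v \in H2 ->
  hub a (H1 :|: H2).
Proof.
move=> Hh1 Hh2 Hv1 Hv2.
have [t [Hvt Hsink _ _]] := hub_sink Hh1 Hv1.
case: (Hh1) => Hs1 [x1 [Hx1 Hsub1]]; case: (Hh2) => Hs2 [x2 [Hx2 Hsub2]].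
have [S1 N1] := lemW Hs1 Hx1 Hsub1 Hv1 Hvt Hsink.
have [S2 N2] := lemW Hs2 Hx2 Hsub2 Hv2 Hvt Hsink.
apply: hub_union_common Hh1 Hh2 _ S1 N1 S2 N2.
by apply: (strong_union Hs1 Hs2 Hv1 Hv2 Hv1 Hv2); apply: connect0.
Qed.

Lemma eq_or_arc x y : x = y \/ a x y -> y = x \/ a y x -> x = y.
Proof.
case=> // Hxy; case=> [->|Hyx] //.
by move: (asym Hxy); rewrite Hyx.
Qed.

Lemma disj_false (A B : {set T}) x : [disjoint A & B] -> x \in A -> x \in B -> False.
Proof.
move=> D HA HB; move: D; rewrite -setI_eq0 => /eqP/setP/(_ x).
by rewrite inE in_set0 HA HB.
Qed.

Lemma vertex_hub v : 1 < #|T| -> strong a -> hub a [set v].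
Proof.
move=> HT Hs; split.
  split; first by apply/set0Pn; exists v; rewrite inE.
  by move=> x y /set1P -> /set1P ->; apply: connect0.
have [y Hy] : exists y, y != v.
  apply: NNPP => H.
  have : #|T| <= 1.
    rewrite -(card1 v); apply: subset_leq_card; apply/subsetP => z _.
    rewrite inE; apply/eqP; apply: NNPP => Hz; apply: H; exists z; exact/eqP.
  by rewrite leqNgt HT.
move: (Hs v y) => /connectP [p Hp Ey].
case: p Hp Ey => [|z p] /=; first by move=> _ E; rewrite E eqxx in Hy.
move=> /andP [Hvz _] _; exists z; split.
  rewrite inE; apply/eqP => E; move: Hvz; rewrite E; apply/negP; exact: noloop.
by rewrite sub1set inE.
Qed.

Lemma bigger_hub (H : {set T}) : hub a H -> ~ maximal_hub a H ->
  exists H', hub a H' /\ H \proper H'.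
Proof.
move=> Hh Hnm.
case: (classic (forall H', hub a H' -> H \subset H' -> H' = H)) => [Hm|Hm].
  by exfalso; apply: Hnm; split.
have [H' HH'] := not_all_ex_not _ _ Hm.
have [Hh' HH2] := imply_to_and _ _ HH'.
have [Hsub Hne] := imply_to_and _ _ HH2.
exists H'; split => //.
by rewrite properEneq Hsub andbT; apply/eqP => E; apply: Hne.
Qed.

Lemma exists_max n (H : {set T}) : #|T| - #|H| <= n -> hub a H ->
  exists M, maximal_hub a M /\ H \subset M.
Proof.
elim: n H => [|n IH] H Hn Hh.
  case: (classic (maximal_hub a H)) => [Hm|Hm]; first by exists H; split.
  have [H' [_ Hp]] := bigger_hub Hh Hm.
  have h1 := proper_card Hp; have h2 := max_card (mem H').
  move: Hn; rewrite leqn0 subn_eq0 => Hn.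
  by have := leq_ltn_trans Hn (leq_trans h1 h2); rewrite ltnn.
case: (classic (maximal_hub a H)) => [Hm|Hm]; first by exists H; split.
have [H' [Hh' Hp]] := bigger_hub Hh Hm.
have h1 := proper_card Hp; have h2 := max_card (mem H').
have Hn' : #|T| - #|H'| <= n.
  rewrite leq_subLR; rewrite leq_subLR in Hn.
  apply: (leq_trans Hn); rewrite -addSnnS; exact: leq_add.
have [M [HM Hsub']] := IH H' Hn' Hh'.
by exists M; split => //; apply: subset_trans (proper_sub Hp) Hsub'.
Qed.

Lemma max_disjoint (H1 H2 : {set T}) : maximal_hub a H1 -> maximal_hub a H2 -> H1 != H2 ->
  [disjoint H1 & H2].
Proof.
move=> [Hh1 M1] [Hh2 M2] Hne.
rewrite -setI_eq0; apply/eqP/setP => v; rewrite inE in_set0; apply/negP => /andP [Hv1 Hv2].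
have Hu := union_inter Hh1 Hh2 Hv1 Hv2.
have E1 := M1 _ Hu (subsetUl H1 H2); have E2 := M2 _ Hu (subsetUr H1 H2).
by move: Hne; rewrite -E1 -{2}E2 eqxx.
Qed.

Lemma no_both (H1 H2 : {set T}) u1 u2 w1 w2 :
  maximal_hub a H1 -> maximal_hub a H2 -> H1 != H2 ->
  u1 \in H1 -> u2 \in H2 -> a u1 u2 -> w2 \in H2 -> w1 \in H1 -> a w2 w1 -> False.
Proof.
move=> [Hh1 M1] [Hh2 M2] Hne Hu1 Hu2 A12 Hw2 Hw1 A21.
have [t1 [Ht1 Sk1 /subsetP I1 N1]] := hub_sink Hh1 Hu1.
have [t2 [Ht2 Sk2 /subsetP I2 N2]] := hub_sink Hh2 Hu2.
have [s1 [Hs1 Sk3 /subsetP I3 N3]] := hub_sink Hh1 Hw1.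
have [s2 [Hs2 Sk4 /subsetP I4 N4]] := hub_sink Hh2 Hw2.
have in1 := fun x (H : x \in H1) => I1 x H; have in2 := fun x (H : x \in H2) => I2 x H.
have in3 := fun x (H : x \in H1) => I3 x H; have in4 := fun x (H : x \in H2) => I4 x H.
rewrite /innb in in1 in2 in3 in4.
have c1 : t1 = t2 \/ a t1 t2.
  case: (Sk1 _ A12) => [E|A].
    by right; rewrite -E; have := in2 _ Hu2; rewrite inE.
  exact: Sk2.
have c2 : s2 = s1 \/ a s2 s1.
  case: (Sk4 _ A21) => [E|A].
    by right; rewrite -E; have := in3 _ Hw1; rewrite inE.
  exact: Sk3.
have c3 : s1 = t1.
  apply: eq_or_arc.
    by apply: Sk1; have := in3 _ Hu1; rewrite inE.
  by apply: Sk3; have := in1 _ Hw1; rewrite inE.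
have c4 : s2 = t2.
  apply: eq_or_arc.
    by apply: Sk2; have := in4 _ Hu2; rewrite inE.
  by apply: Sk4; have := in2 _ Hw2; rewrite inE.
rewrite c3 c4 in c2.
have E := eq_or_arc c1 c2.
have Hs : strong_in a (H1 :|: H2).
  apply: (strong_union Hh1.1 Hh2.1 Hu1 Hu2 Hw1 Hw2).
    by apply: connect1; apply/and3P; split; rewrite // !inE ?Hu1 ?Hu2 ?orbT.
  by apply: connect1; apply/and3P; split; rewrite // !inE ?Hw1 ?Hw2 ?orbT.
have Hu : hub a (H1 :|: H2).
  have S1 : H1 \subset innb a t1 by apply/subsetP => x Hx; move: (in1 _ Hx); rewrite /innb.
  have S2 : H2 \subset innb a t1 by rewrite E; apply/subsetP.
  have N2' : t1 \notin H2 by rewrite E.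
  exact: (hub_union_common Hh1 Hh2 Hs S1 N1 S2 N2').
have E1 := M1 _ Hu (subsetUl H1 H2); have E2 := M2 _ Hu (subsetUr H1 H2).
by move: Hne; rewrite -E1 -{2}E2 eqxx.
Qed.

Lemma one_dir (H1 H2 : {set T}) u1 u2 : hub a H1 -> [disjoint H1 & H2] ->
  u1 \in H1 -> u2 \in H2 -> a u1 u2 ->
  (forall w2 w1, w2 \in H2 -> w1 \in H1 -> ~~ a w2 w1) -> arcs_into a H1 H2.
Proof.
move=> [[_ Hs] _] D Hu1 Hu2 A12 NB.
have prop : forall s h h', s \in H2 -> h \in H1 -> h' \in H1 -> a h s -> a h' s.
  move=> s h h' Hs2 Hh Hh'.
  apply: (conn_inv (P := fun z => a z s)) (Hs _ _ Hh Hh').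
  move=> z w /andP [Hz /andP [Hw Hzw]] Hzs.
  have Hws : w != s by apply/eqP => E; subst w; apply: (disj_false D Hw Hs2).
  case/orP: (tt_cmp Hzw Hzs Hws) => // Hsw.
  by move: (NB _ _ Hs2 Hw); rewrite Hsw.
exists [set s in H2 | a u1 s]; split.
- by apply/subsetP => s; rewrite inE => /andP [].
- by apply/set0Pn; exists u2; rewrite inE Hu2 A12.
- split.
    move=> u v; rewrite !inE => /andP [_ Hu] /andP [_ Hv]; exact: (tt_cmp Hu Hv).
  move=> u v w; rewrite !inE => /andP [_ Hu] /andP [_ Hv] /andP [_ Hw]; exact: (tt_tr Hu Hv Hw).
- move=> u v [[Hu Hv]|[Hu Hv]]; split.
  + move=> Huv; split => //; rewrite inE Hv /=; exact: (prop _ u).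
  + case=> _; rewrite inE => /andP [_ H]; exact: (prop _ u1).
  + by move=> Huv; move: (NB _ _ Hu Hv); rewrite Huv.
  + by case=> H _; case: (disj_false D H Hu).
Qed.

Lemma ai_arc (H1 H2 : {set T}) : H1 != set0 -> arcs_into a H1 H2 ->
  exists u v, [/\ u \in H1, v \in H2 & a u v].
Proof.
move=> /set0Pn [h Hh] [S [/subsetP HS /set0Pn [s Hs] _ Hiff]].
exists h, s; split => //; first exact: HS.
by apply/(Hiff h s); [left; split => //; apply: HS|].
Qed.

Lemma ai_noback (H1 H2 : {set T}) : [disjoint H1 & H2] -> arcs_into a H1 H2 ->
  forall w2 w1, w2 \in H2 -> w1 \in H1 -> ~~ a w2 w1.
Proof.
move=> D [S [_ _ _ Hiff]] w2 w1 Hw2 Hw1; apply/negP => A.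
have [H _] := (Hiff w2 w1 (or_intror (conj Hw2 Hw1))).1 A.
exact: (disj_false D H Hw2).
Qed.

End Proof.

Theorem claim2p5 (T : finType) (a : rel T) :
  1 < #|T| ->
  oriented a ->
  strong a ->
  (forall x : T, transitive_tournament a (outnb a x)) ->
  (forall P : {set {set T}}, (forall H, H \in P <-> maximal_hub a H) ->
     partition P [set: T]) /\
  (forall H1 H2 : {set T}, maximal_hub a H1 -> maximal_hub a H2 -> H1 != H2 ->
     exactly_one3 (~ some_arc_between a H1 H2)
                  (arcs_into a H1 H2)
                  (arcs_into a H2 H1)).
Proof.
move=> HT Hor Hs Htt; split.
  move=> P HP; apply/and3P; split.
  - apply/eqP/setP => x; rewrite inE; apply/bigcupP.
    have Hx := vertex_hub Hor x HT Hs.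
    have [M [HM Hsub]] := exists_max (leqnn _) Hx.
    exists M; first exact: (proj2 (HP M) HM).
    by move/subsetP: Hsub; apply; rewrite inE.
  - apply/trivIsetP => A B HA HB Hne.
    exact: (max_disjoint Hor Htt (proj1 (HP A) HA) (proj1 (HP B) HB) Hne).
  - by apply/negP => /HP [[[Hn _] _] _]; rewrite eqxx in Hn.
move=> H1 H2 M1 M2 Hne.
have D := max_disjoint Hor Htt M1 M2 Hne.
have D' : [disjoint H2 & H1] by rewrite disjoint_sym.
have N1 : H1 != set0 by case: M1 => [[[]]].
have N2 : H2 != set0 by case: M2 => [[[]]].
case: (classic (exists u v, [/\ u \in H1, v \in H2 & a u v])) => E12;
case: (classic (exists u v, [/\ u \in H2, v \in H1 & a u v])) => E21.
- case: E12 => u1 [u2 [Hu1 Hu2 A12]]; case: E21 => w2 [w1 [Hw2 Hw1 A21]].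
  by case: (no_both Hor Htt M1 M2 Hne Hu1 Hu2 A12 Hw2 Hw1 A21).
- right; left; split; first by move=> H; apply: H; case: E12 => u [v [Hu Hv A]]; exists u, v; by rewrite Hu Hv A.
  split.
    case: E12 => u [v [Hu Hv A]]; apply: (one_dir Htt M1.1 D Hu Hv A).
    move=> w2 w1 Hw2 Hw1; apply/negP => A'; apply: E21; by exists w2, w1.
  by move=> Hai; apply: E21; apply: (ai_arc N2 Hai).
- right; right; split.
    move=> H; apply: H; case: E21 => u [v [Hu Hv A]]; exists v, u.
    by rewrite Hu Hv A orbT.
  split; first by move=> Hai; apply: E12; apply: (ai_arc N1 Hai).
  case: E21 => u [v [Hu Hv A]]; apply: (one_dir Htt M2.1 D' Hu Hv A).
  move=> w2 w1 Hw2 Hw1; apply/negP => A'; apply: E12; by exists w2, w1.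
- left; split.
    move=> [u [v [Hu Hv /orP [A|A]]]]; first by apply: E12; exists u, v.
    by apply: E21; exists v, u.
  split; first by move=> Hai; apply: E12; apply: (ai_arc N1 Hai).
  by move=> Hai; apply: E21; apply: (ai_arc N2 Hai).
Qed.
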